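(* Let $2\le n<\infty$ be an integer and $R=\mathbb{Z}_2\times\cdots\times\mathbb{Z}_2$ ($n$ factors). Then $$\omega(\Gamma'(R))=\chi(\Gamma'(R))=\binom{n}{\lfloor n/2\rfloor}.$$
   Context: All rings are commutative with identity. $W^*(R)$ denotes the set of non-zero non-unit elements of $R$. The cozero-divisor graph $\Gamma'(R)$ is the simple graph with vertex set $W^*(R)$, in which distinct $a,b$ are adjacent iff $a\notin Rb$ and $b\notin Ra$. $\omega(G)$ denotes the clique number and $\chi(G)$ the chromatic number of a graph $G$. *)

(* Defs.v *)
From HB Require Import structures.
From mathcomp Require Import all_boot all_order all_algebra.

Set Implicit Arguments.
Unset Strict Implicit.
Unset Printing Implicit Defensive.

Import GRing.Theory.
Local Open Scope ring_scope.

(* A simple graph is given by a vertex set V : {set T} (T finite) and a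
   symmetric irreflexive-on-use adjacency relation e : rel T. *)
Section GraphInvariants.
Variable T : finType.
Variable V : {set T}.
Variable e : rel T.

Definition is_clique (K : {set T}) : bool :=
  (K \subset V) && [forall x in K, forall y in K, (x != y) ==> e x y].

Definition clique_number : nat :=
  (\max_(K : {set T} | is_clique K) #|K|)%N.

(* a proper colouring of the vertices of V (colours taken in 'I_#|T|,
   which is enough room for any colouring of V) *)
Definition proper_coloring (f : {ffun T -> 'I_#|T|}) : bool :=
  [forall x in V, forall y in V, e x y ==> (f x != f y)].

Definition chromatic_number : nat :=
  (\big[minn/#|T|]_(f : {ffun T -> 'I_#|T|} | proper_coloring f) #|f @: V|)%N.
End GraphInvariants.

Section Cozero.
Variable R : finComPzRingType.

Definition in_principal (a b : R) : bool := [exists r : R, a == r * b].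

Definition is_unit (a : R) : bool := [exists b : R, a * b == 1].

Definition W_star : {set R} := [set a : R | (a != 0) && ~~ is_unit a].

Definition cozero_adj : rel R :=
  fun a b => [&& a != b, ~~ in_principal a b & ~~ in_principal b a].
End Cozero.

Definition Z2n (n : nat) := {ffun 'I_n -> 'F_2}.
HB.instance Definition _ n := Finite.on (Z2n n).
HB.instance Definition _ n := GRing.PzRing.on (Z2n n).
HB.instance Definition _ n :=
  GRing.PzRing_hasCommutativeMul.Build (Z2n n) (@ffun_mulC _ _).

(* Main.v *)
Require Import Defs.
From HB Require Import structures.
From mathcomp Require Import all_boot all_order all_algebra.
From mathcomp Require Import zify.
Set Implicit Arguments. Unset Strict Implicit. Unset Printing Implicit Defensive.

Section SCD.
Variable p : nat.
Local Notation n := p.+1.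
Implicit Types (A B X Y : {set 'I_n}) (C : seq {set 'I_n}).

Definition ext (x : 'I_n) C : seq (seq {set 'I_n}) :=
  if C is X :: r then
    rcons C (x |: last X r) :: (if r is _ :: _ then [:: map (fun Y => x |: Y) (belast X r)] else [::])
  else [::].

Fixpoint scd (m : nat) : seq (seq {set 'I_n}) :=
  if m is m'.+1 then flatten (map (ext (inord m')) (scd m')) else [:: [:: set0]].

Definition low m := [set i : 'I_n | i < m].

Lemma belast_iota k l : belast k (iota k.+1 l) = iota k l.
Proof. by elim: l k => [|l IH] k //=; rewrite IH. Qed.

Lemma sorted_cmp C X Y : sorted (fun A B => A \subset B) C -> X \in C -> Y \in C ->
  X \subset Y \/ Y \subset X.
Proof.
have tr : transitive (fun A B : {set 'I_n} => A \subset B) by move=> ???; apply: subset_trans.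
elim: C => [|Z C IH] //= Hs; rewrite !inE.
have /allP Hall := order_path_min tr Hs.
have HsC : sorted (fun A B => A \subset B) C by apply: (path_sorted Hs).
case/orP=> [/eqP->|HX]; case/orP=> [/eqP->|HY]; [by left| by left; apply: Hall|by right; apply: Hall|exact: IH].
Qed.


Definition sub := fun A B : {set 'I_n} => A \subset B.

Definition good m C :=
  [/\ exists2 k, k.*2 <= m & map (fun Y => #|Y|) C = iota k (m - k.*2).+1,
      sorted sub C & forall Y, Y \in C -> Y \subset low m].

Lemma last_iota k l : last k (iota k.+1 l) = k + l.
Proof. by elim: l k => [|l IH] k /=; rewrite ?addn0 // IH addSnnS. Qed.

Lemma sorted_rcons_l e s (z : {set 'I_n}) : sorted e (rcons s z) -> sorted e s.
Proof. by case: s => //= a s; rewrite rcons_path => /andP[]. Qed.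

Lemma lowS m (Hm : m < n) : low m.+1 = (inord m : 'I_n) |: low m.
Proof.
apply/setP=> i; rewrite !inE ltnS leq_eqVlt; congr (_ || _).
by apply/eqP/eqP=> [<-|->]; [rewrite inord_val| rewrite inordK].
Qed.

Lemma x_notin_low m (Hm : m < n) : (inord m : 'I_n) \notin low m.
Proof. by rewrite inE inordK // ltnn. Qed.

Lemma ext_good m C D : m < n -> good m C -> D \in ext (inord m) C -> good m.+1 D.
Proof.
move=> Hm [[k Hk Hc] Hs Hl].
set x : 'I_n := inord m.
have xn := x_notin_low Hm; rewrite -/x in xn.
have xnY : forall Y, Y \in C -> x \notin Y.
  by move=> Y /Hl /subsetP HY; apply/negP=> /HY; apply/negP.
case: C Hc Hs Hl xnY => [|X r] //= [HX Hr] Hs Hl xnY.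
have Hr' : size r = m - k.*2 by rewrite -(size_map (fun Y : {set 'I_n} => #|Y|)) Hr size_iota.
rewrite inE => /orP[/eqP->|].
  split.
  - exists k; first by lia.
    have HL : #|last X r| = k + (m - k.*2).
      by rewrite -(last_map (fun Y : {set 'I_n} => #|Y|)) HX Hr last_iota.
    rewrite -rcons_cons map_rcons /= HX Hr cardsU1 xnY ?mem_last // HL.
    have -> : (m.+1 - k.*2) = (m - k.*2).+1 by lia.
    rewrite -cats1; congr (_ :: _); rewrite -[(m - k.*2).+1]addn1 iotaD /=.
    by rewrite add1n addSn.
  - by rewrite /= -/(sorted sub (X :: r)) rcons_path Hs /sub subsetUr.
  - move=> Y; rewrite -rcons_cons mem_rcons inE => /orP[/eqP->|HY].
      by rewrite (lowS Hm) setUS // Hl // mem_last.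
    by rewrite (lowS Hm) (subset_trans (Hl _ HY)) // subsetUr.
case: r Hr HX Hr' Hs Hl xnY => [|Z r] // Hr HX Hr' Hs Hl xnY; rewrite inE => /eqP->.
split.
- exists k.+1; first by rewrite /= in Hr'; lia.
  have -> : [seq #|Y| | Y <- [seq x |: Y | Y <- belast X (Z :: r)]] =
     map (succn \o (fun Y : {set 'I_n} => #|Y|)) (belast X (Z :: r)).
    by rewrite -map_comp; apply/eq_in_map => Y /mem_belast HY /=; rewrite cardsU1 xnY.
  rewrite map_comp -belast_map HX Hr belast_iota.
  have -> : (m.+1 - (k.+1).*2).+1 = m - k.*2 by rewrite /= in Hr'; lia.
  by rewrite -add1n iotaDl.
- rewrite (@sorted_map _ _ (fun Y : {set 'I_n} => x |: Y) sub); apply: (@sub_sorted _ sub).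
    by move=> A B; rewrite /sub /relpre => HAB; apply: setUS.
  by apply: (@sorted_rcons_l _ _ (last X (Z :: r))); rewrite -lastI.
- move=> Y /mapP[W /mem_belast HW ->].
  by rewrite (lowS Hm) setUS // Hl.
Qed.



Lemma scd_inv m : m <= n ->
  [/\ forall C, C \in scd m -> good m C,
      forall A, A \subset low m -> exists2 C, C \in scd m & A \in C &
      forall C1 C2 M, C1 \in scd m -> C2 \in scd m -> M \in C1 -> M \in C2 -> C1 = C2].
Proof.
elim: m => [|m IH] Hm.
  split.
  - move=> C; rewrite inE => /eqP->; split.
    + by exists 0 => //; rewrite /= cards0.
    + by [].
    + by move=> Y; rewrite inE => /eqP->; rewrite sub0set.
  - move=> A HA; exists [:: set0]; first by rewrite inE.
    have -> : A = set0.
      apply/eqP; rewrite -subset0; apply: (subset_trans HA).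
      by apply/subsetP=> i; rewrite inE.
    by rewrite inE.
  - by move=> C1 C2 M; rewrite !inE => /eqP-> /eqP->.
have Hm' : m < n by [].
case: (IH (ltnW Hm)) => G1 G2 G3.
set x : 'I_n := inord m.
have xn := x_notin_low Hm'; rewrite -/x in xn.
have xnY : forall C Y, C \in scd m -> Y \in C -> x \notin Y.
  move=> C Y /G1 [_ _ Hl] /Hl /subsetP HY; apply/negP=> /HY; by rewrite (negbTE xn).
have Hlow : low m.+1 = x |: low m by rewrite lowS.
split.
- move=> D /flatten_mapP [C HC HD]; exact: (ext_good Hm' (G1 _ HC) HD).
- move=> A HA.
  have Hd : A :\ x \subset low m.
    apply/subsetP=> i; rewrite in_setD1 => /andP[Hi HiA].
    by move/subsetP: HA => /(_ _ HiA); rewrite Hlow in_setU1 (negbTE Hi).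
  case: (boolP (x \in A)) => HxA.
  + case: (G2 _ Hd) => C HC HAC.
    case: C HC HAC => [|X r] // HC HAC.
    move: (HAC); rewrite lastI mem_rcons inE => /orP[/eqP Hlast|Hb].
      exists (rcons (X :: r) (x |: last X r)).
        by apply/flatten_mapP; exists (X :: r) => //; rewrite /= inE eqxx.
      by rewrite mem_rcons inE -Hlast setD1K // eqxx.
    case: r HC HAC Hb => [|Z r] HC HAC Hb //.
    exists [seq x |: Y | Y <- belast X (Z :: r)].
      by apply/flatten_mapP; exists (X :: Z :: r) => //; rewrite /= !inE eqxx orbT.
    by apply/mapP; exists (A :\ x) => //; rewrite setD1K.
  + have HA' : A \subset low m.
      apply/subsetP=> i HiA; move/subsetP: HA => /(_ _ HiA).
      rewrite Hlow in_setU1 => /orP[/eqP Hix|//].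
      by rewrite -Hix HiA in HxA.
    case: (G2 _ HA') => C HC HAC.
    case: C HC HAC => [|X r] // HC HAC.
    exists (rcons (X :: r) (x |: last X r)).
      by apply/flatten_mapP; exists (X :: r) => //; rewrite /= inE eqxx.
    by rewrite mem_rcons inE HAC orbT.
- move=> D1 D2 M /flatten_mapP [C1 HC1 HD1] /flatten_mapP [C2 HC2 HD2] HM1 HM2.
  have back : forall C D, C \in scd m -> D \in ext x C -> M \in D -> M :\ x \in C.
    move=> C D HC; case: C HC => [|X r] // HC.
    rewrite inE => /orP[/eqP->|].
      rewrite mem_rcons inE => /orP[/eqP->|HMC].
        by rewrite setU1K ?mem_last // (xnY _ _ HC) ?mem_last.
      have -> : M :\ x = M.
        by apply/setP=> i; rewrite in_setD1 andb_idl // => HiM; apply/eqP=> Hix; move: (xnY _ _ HC HMC); rewrite -Hix HiM.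
      by [].
    case: r HC => [|Z r] // HC; rewrite inE => /eqP-> /mapP [Y HY ->].
    by rewrite setU1K ?(xnY _ _ HC) ?(mem_belast HY) // mem_belast.
  have EC := G3 _ _ _ HC1 HC2 (back _ _ HC1 HD1 HM1) (back _ _ HC2 HD2 HM2).
  subst C2.
  have [_ _ HCg] := G1 _ HC1.
  have uC : uniq C1.
    have [[k _ Hk] _ _] := G1 _ HC1.
    by apply: (@map_uniq _ _ (fun Y : {set 'I_n} => #|Y|)); rewrite Hk iota_uniq.
  have xin : forall Y, Y \in C1 -> x \notin Y by move=> Y; apply: xnY.
  case: C1 HC1 HD1 HD2 HM1 HM2 uC xin {HCg back HC2} => [|X r] // HC1.
  have Hcross : forall D D', D = rcons (X :: r) (x |: last X r) ->
      D' \in (if r is _ :: _ then [:: [seq x |: Y | Y <- belast X r]] else [::]) ->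
      M \in D -> M \in D' -> uniq (X :: r) -> (forall Y, Y \in X :: r -> x \notin Y) -> False.
    move=> D D' -> HD' HMD HMD' uC xin.
    case: r HD' HC1 uC xin HMD => [|Z r] //; rewrite inE => /eqP HD' HC1 uC xin HMD.
    move: HMD'; rewrite HD' => /mapP [Y HY HMY].
    move: HMD; rewrite mem_rcons inE => /orP[/eqP HMl|HMC].
      have HYl : Y = last X (Z :: r).
        by rewrite -(setU1K (xin _ (mem_belast HY))) -HMY HMl setU1K // xin // mem_last.
      move: uC; rewrite lastI rcons_uniq => /andP[/negP []].
      by rewrite -HYl.
    by move: (xin _ HMC); rewrite HMY in_setU1 eqxx.
  rewrite !inE => /orP[/eqP E1|H1] /orP[/eqP E2|H2] HM1 HM2 uC xin.
  + by rewrite E1 E2.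
  + by case: (Hcross _ _ E1 H2 HM1 HM2 uC xin).
  + by case: (Hcross _ _ E2 H1 HM2 HM1 uC xin).
  + by move: H1 H2; case: r {Hcross HC1 uC xin HM1 HM2} => [|Z r] //; rewrite !inE => /eqP-> /eqP->.
Qed.

Lemma mid_exists : exists mid : {set 'I_n} -> {set 'I_n},
  (forall A, #|mid A| = n./2) /\ (forall A B, mid A = mid B -> A \subset B \/ B \subset A).
Proof.
have [G1 G2 G3] := scd_inv (leqnn n).
set L := scd n in G1 G2 G3.
pose chainOf A := nth [::] L (find (fun C => A \in C) L).
have HcA : forall A, chainOf A \in L /\ A \in chainOf A.
  move=> A.
  have [C HC HAC] : exists2 C, C \in L & A \in C.
    by apply: G2; apply/subsetP=> i _; rewrite inE.
  have Hh : has (fun C => A \in C) L by apply/hasP; exists C.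
  by split; [apply: mem_nth; rewrite -has_find | exact: (nth_find [::] Hh)].
pose mid A := nth set0 (chainOf A) (find (fun Y : {set 'I_n} => #|Y| == n./2) (chainOf A)).
have Hm : forall A, mid A \in chainOf A /\ #|mid A| = n./2.
  move=> A; have [HL _] := HcA A.
  have [[k Hk Hc] _ _] := G1 _ HL.
  have Hh : has (fun Y : {set 'I_n} => #|Y| == n./2) (chainOf A).
    have : n./2 \in map (fun Y : {set 'I_n} => #|Y|) (chainOf A).
      rewrite Hc mem_iota; have := odd_double_half n; rewrite -!muln2 in Hk *.
      case: (odd n) => /= E; apply/andP; split; lia.
    by case/mapP=> Y HY HYe; apply/hasP; exists Y => //; rewrite -HYe.
  split; first by apply: mem_nth; rewrite -has_find.
  exact/eqP/(nth_find set0 Hh).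
exists mid; split; first by move=> A; case: (Hm A).
move=> A B Hab.
have [HLA HAA] := HcA A; have [HLB HBB] := HcA B.
have [HmA _] := Hm A; have [HmB _] := Hm B.
rewrite Hab in HmA.
have E := G3 _ _ _ HLA HLB HmA HmB.
have [_ Hs _] := G1 _ HLB.
by rewrite E in HAA; apply: (sorted_cmp Hs).
Qed.
End SCD.
From mathcomp Require Import zify.
Lemma bigmin_le_seq (I : eqType) (s : seq I) (P : pred I) (F : I -> nat) x0 j :
  j \in s -> P j -> (\big[minn/x0]_(i <- s | P i) F i <= F j)%N.
Proof.
elim: s => [|a s IH] //; rewrite inE big_cons => /orP[/eqP<-|Hj] Pj.
  by rewrite Pj geq_minl.
case: (P a); last exact: IH.
by rewrite (leq_trans (geq_minr _ _)) // IH.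
Qed.
Lemma bigmin_le (I : finType) (P : pred I) (F : I -> nat) x0 j :
  P j -> (\big[minn/x0]_(i | P i) F i <= F j)%N.
Proof. by move=> Pj; apply: bigmin_le_seq => //; rewrite mem_index_enum. Qed.
Import GRing.Theory.

Section Glue.
Variable p : nat.
Local Notation n := p.+1.
Local Notation R := (Z2n n).
Local Open Scope ring_scope.

Lemma mulE (a b : R) i : (a * b) i = a i * b i.
Proof. by rewrite ffunE. Qed.
Lemma oneE (i : 'I_n) : (1 : R) i = 1.
Proof. by rewrite ffunE. Qed.
Lemma zeroE (i : 'I_n) : (0 : R) i = 0.
Proof. by rewrite ffunE. Qed.
Lemma F2cases (z : 'F_2) : z = 0 \/ z = 1.
Proof. case: z => [[|[|k]] Hk]; [left|right|by []]; exact: val_inj. Qed.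

Definition S (a : R) : {set 'I_n} := [set i | a i != 0].
Definition chi (A : {set 'I_n}) : R := [ffun i => (i \in A)%:R].

Lemma S_chi A : S (chi A) = A.
Proof. by apply/setP=> i; rewrite inE ffunE; case: (i \in A); rewrite ?oner_neq0 ?eqxx. Qed.

Lemma chi_S a : chi (S a) = a.
Proof. by apply/ffunP=> i; rewrite ffunE inE; case: (F2cases (a i)) => ->; rewrite ?oner_neq0 ?eqxx. Qed.

Lemma chi_inj : injective chi. Proof. exact: can_inj S_chi. Qed.
Lemma S_inj : injective S. Proof. exact: can_inj chi_S. Qed.

Lemma principalE a b : in_principal a b = (S a \subset S b).
Proof.
apply/existsP/subsetP => [[r /eqP ->] i|H].
  by rewrite !inE mulE; apply: contra => /eqP->; rewrite mulr0.
exists a; apply/eqP/ffunP=> i; rewrite mulE.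
case: (F2cases (a i)) => Ha; first by rewrite Ha mul0r.
have : i \in S b by apply: H; rewrite inE Ha oner_neq0.
rewrite inE Ha; case: (F2cases (b i)) => ->; by rewrite ?eqxx ?mulr1.
Qed.

Lemma unitE a : is_unit a = (S a == setT).
Proof.
apply/existsP/eqP => [[b /eqP Hb]|H].
  apply/setP=> i; rewrite !inE; apply/negP=> /eqP Hai.
  by move/ffunP: Hb => /(_ i); rewrite mulE oneE Hai mul0r => /eqP; rewrite eq_sym oner_eq0.
exists a; apply/eqP/ffunP=> i; rewrite mulE oneE.
have : i \in S a by rewrite H inE.
rewrite inE; case: (F2cases (a i)) => ->; by rewrite ?eqxx ?mulr1.
Qed.

Lemma nz_E a : (a != 0) = (S a != set0).
Proof.
congr negb; apply/eqP/eqP => [->|H].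
  by apply/setP=> i; rewrite !inE zeroE eqxx.
by apply: S_inj; rewrite H; apply/setP=> i; rewrite !inE zeroE eqxx.
Qed.

Lemma WE a : (a \in W_star R) = (S a != set0) && (S a != setT).
Proof. by rewrite inE nz_E unitE. Qed.

Lemma adjE a b : cozero_adj a b = [&& a != b, ~~ (S a \subset S b) & ~~ (S b \subset S a)].
Proof. by rewrite /cozero_adj !principalE. Qed.

End Glue.

Theorem lemma2p5 (n : nat) (hn : (2 <= n)%N) :
  clique_number (W_star (Z2n n)) (@cozero_adj (Z2n n)) = 'C(n, n./2) /\
  chromatic_number (W_star (Z2n n)) (@cozero_adj (Z2n n)) = 'C(n, n./2).
Proof.
case: n hn => [|p] // hn.
have [mid [Hmc Hmcmp]] := mid_exists p.
set h := p.+1./2.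
have [h1 h2] : 0 < h /\ h < p.+1.
  by have := odd_double_half p.+1; rewrite -/h -!muln2; case: (odd p.+1) => /= E; split; lia.
pose M := [set A : {set 'I_p.+1} | #|A| == h].
pose K0 := @chi p @: M.
have cardK0 : #|K0| = 'C(p.+1, h).
  by rewrite card_imset; [rewrite card_draws card_ord | exact: chi_inj].
have K0W : K0 \subset W_star (Z2n p.+1).
  apply/subsetP=> a /imsetP [A]; rewrite inE => /eqP HA ->.
  rewrite WE S_chi; apply/andP; split; apply/negP => /eqP HA'.
    by move: HA; rewrite HA' cards0 => E; rewrite -E in h1.
  by move: HA; rewrite HA' cardsT card_ord => E; rewrite E ltnn in h2.
have clqK0 : is_clique (W_star (Z2n p.+1)) (@cozero_adj (Z2n p.+1)) K0.
  apply/andP; split=> //; apply/forallP=> a; apply/implyP=> /imsetP [A]; rewrite inE => /eqP HA ->.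
  apply/forallP=> b; apply/implyP=> /imsetP [B]; rewrite inE => /eqP HB ->.
  apply/implyP=> Hne; rewrite adjE Hne /= !S_chi.
  have HAB : A != B by apply: contraNneq Hne => ->.
  apply/andP; split; apply/negP=> Hs.
    by move: HAB; rewrite eqEcard Hs HA HB leqnn.
  by move: HAB; rewrite eq_sym eqEcard Hs HA HB leqnn.
have key : forall a b, mid (S a) = mid (S b) -> ~~ cozero_adj a b.
  move=> a b /Hmcmp [] Hs; rewrite adjE Hs /= ?andbF //.
have cliq_le : forall K, is_clique (W_star (Z2n p.+1)) (@cozero_adj (Z2n p.+1)) K ->
    #|K| <= 'C(p.+1, h).
  move=> K /andP [_ /forallP HK].
  rewrite -cardK0 card_imset; last exact: chi_inj.
  rewrite -(@card_in_imset _ _ (fun a => mid (S a)) K).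
    apply: subset_leq_card; apply/subsetP=> X /imsetP [a _ ->].
    by rewrite inE Hmc.
  move=> a b Ha Hb Hab; apply/eqP; apply/negPn/negP=> Hne.
  move: (HK a) => /implyP /(_ Ha) /forallP /(_ b) /implyP /(_ Hb) /implyP /(_ Hne).
  by apply/negP; apply: key.
split.
- apply/eqP; rewrite eqn_leq; apply/andP; split.
  + by apply/bigmax_leqP => K HK; apply: cliq_le.
  + rewrite -cardK0 /clique_number.
    exact: (@leq_bigmax_cond _ (fun K => is_clique (W_star (Z2n p.+1)) (@cozero_adj (Z2n p.+1)) K) (fun K => #|K|) _ clqK0).
- pose T := Z2n p.+1.
  pose f0 : {ffun T -> 'I_#|T|} := [ffun a => enum_rank (@chi p (mid (S a)))].
  have Hf0 : proper_coloring (W_star T) (@cozero_adj T) f0.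
    apply/forallP=> a; apply/implyP=> _; apply/forallP=> b; apply/implyP=> _.
    apply/implyP=> Hadj; apply/negP=> /eqP; rewrite !ffunE => /enum_rank_inj /chi_inj E.
    by move: (key _ _ E); rewrite Hadj.
  apply/eqP; rewrite eqn_leq; apply/andP; split.
  + rewrite /chromatic_number; apply: (leq_trans (bigmin_le _ _ Hf0)).
    apply: (@leq_trans #|(fun A => enum_rank (@chi p A)) @: M|); last first.
      by rewrite (leq_trans (leq_imset_card _ _)) // card_draws card_ord.
    apply: subset_leq_card; apply/subsetP=> c /imsetP [a _ ->].
    by rewrite ffunE; apply/imsetP; exists (mid (S a)) => //; rewrite inE Hmc.
  + rewrite -cardK0 /chromatic_number.
    apply: (big_ind (fun k => #|K0| <= k)).
    * by apply: max_card.
    * by move=> x y Hx Hy; rewrite leq_min Hx Hy.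
    * move=> f /forallP Hf.
      apply: (@leq_trans #|f @: K0|); last exact: subset_leq_card (imsetS _ K0W).
      rewrite (@card_in_imset _ _ f K0) // => a b Ha Hb Hab; apply/eqP; apply/negPn/negP=> Hne.
      have Hadj : cozero_adj a b.
        move/andP: clqK0 => [_ /forallP /(_ a) /implyP /(_ Ha) /forallP /(_ b) /implyP /(_ Hb) /implyP /(_ Hne)] //.
      have WA : a \in W_star T by move/subsetP: K0W; apply.
      have WB : b \in W_star T by move/subsetP: K0W; apply.
      move: (Hf a) => /implyP /(_ WA) /forallP /(_ b) /implyP /(_ WB) /implyP /(_ Hadj).
      by rewrite Hab eqxx.
Qed.
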